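(* Let $R$ be a simple Bezout domain. Then $R$ is a D-K elementary divisor ring if and only if for every nonzero $a\in R$ there exist $u_1,u_2,v_1,v_2\in R$ such that $u_1av_1+u_2av_2=1$.
   Context: All rings are associative with nonzero identity. A simple ring is one with no two-sided ideals other than $0$ and $R$. A Bezout domain is a domain in which every finitely generated right ideal and every finitely generated left ideal is principal. A nonzero element $a$ is invariant if $aR=Ra$. For $x\in R$, $RxR$ denotes the two-sided ideal generated by $x$. Two matrices $A,B$ over $R$ are equivalent if $B=PAQ$ for invertible $P,Q$. $R$ is a D-K elementary divisor ring if every (rectangular) matrix over $R$ is equivalent to a matrix $\mathrm{diag}(\varepsilon_1,\dots,\varepsilon_r,0,\dots,0)$ such that $R\varepsilon_{i+1}R\subseteq \varepsilon_iR\cap R\varepsilon_i$ for $i=1,\dots,r-1$ and $\varepsilon_1,\dots,\varepsilon_{r-1}$ are invariant elements. *)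

(* Defs.v *)
From HB Require Import structures.
From mathcomp Require Import all_boot all_order all_algebra.
Set Implicit Arguments. Unset Strict Implicit. Unset Printing Implicit Defensive.
Import GRing.Theory.
Local Open Scope ring_scope.

Section Defs.
Variable R : nzRingType.

Definition twosided_ideal (I : R -> Prop) : Prop :=
  [/\ I 0, (forall x y, I x -> I y -> I (x + y)),
      (forall r x, I x -> I (r * x)) & (forall r x, I x -> I (x * r))].

Definition simple_ring : Prop :=
  forall I : R -> Prop, twosided_ideal I ->
    (forall x, I x -> x = 0) \/ (forall x, I x).

(* domain: no zero divisors (1 != 0 is part of nzRingType) *)
Definition domain : Prop := forall a b : R, a * b = 0 -> a = 0 \/ b = 0.

Definition in_rideal_gen (s : seq R) (x : R) : Prop :=
  exists c : 'I_(size s) -> R, x = \sum_(i < size s) s`_i * c i.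
Definition in_lideal_gen (s : seq R) (x : R) : Prop :=
  exists c : 'I_(size s) -> R, x = \sum_(i < size s) c i * s`_i.

Definition bezout_domain : Prop :=
  domain /\
  (forall s : seq R, exists d : R,
     forall x, in_rideal_gen s x <-> exists t, x = d * t) /\
  (forall s : seq R, exists d : R,
     forall x, in_lideal_gen s x <-> exists t, x = t * d).

(* invariant element: nonzero a with aR = Ra *)
Definition invariant (a : R) : Prop :=
  a != 0 /\ (forall t, exists t', a * t = t' * a) /\
  (forall t, exists t', t * a = a * t').

Definition in_twosided_gen (x y : R) : Prop :=
  exists (k : nat) (a b : 'I_k -> R), y = \sum_(i < k) a i * x * b i.

Definition invertible_mx (n : nat) (P : 'M[R]_n) : Prop :=
  exists P' : 'M[R]_n, P *m P' = 1%:M /\ P' *m P = 1%:M.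

Definition diag_rect (m n r : nat) (eps : nat -> R) : 'M[R]_(m, n) :=
  \matrix_(i < m, j < n) (if (i == j :> nat) && (i < r)%N then eps i else 0).

Definition DK_elementary_divisor_ring : Prop :=
  forall (m n : nat) (A : 'M[R]_(m, n)),
    exists (P : 'M[R]_m) (Q : 'M[R]_n) (r : nat) (eps : nat -> R),
      invertible_mx P /\ invertible_mx Q /\
          P *m A *m Q = diag_rect m n r eps /\
          (r <= minn m n)%N /\
          (forall i, (i < r)%N -> eps i != 0) /\
          (forall i, (i.+1 < r)%N -> forall y, in_twosided_gen (eps i.+1) y ->
              (exists t, y = eps i * t) /\ (exists t, y = t * eps i)) /\
          (forall i, (i.+1 < r)%N -> invariant (eps i)).

End Defs.

(* Main.v *)
Require Import Defs.
From HB Require Import structures.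
From mathcomp Require Import all_boot all_order all_algebra.
Set Implicit Arguments. Unset Strict Implicit. Unset Printing Implicit Defensive.
Import GRing.Theory.
Local Open Scope ring_scope.

Lemma dom_l (R : nzRingType) : domain R -> forall a x : R, a != 0 -> a * x = 0 -> x = 0.
Proof. by move=> D a x /eqP Ha /D [] //. Qed.
Lemma dom_r (R : nzRingType) : domain R -> forall a x : R, a != 0 -> x * a = 0 -> x = 0.
Proof. by move=> D a x /eqP Ha /D [] //. Qed.

Lemma dom_inv (R : nzRingType) : domain R -> forall x y : R, x * y = 1 -> y * x = 1.
Proof.
move=> D x y H.
have y0 : y != 0 by apply/eqP => y0; move: H; rewrite y0 mulr0 => /eqP; rewrite eq_sym oner_eq0.
apply/eqP; rewrite -subr_eq0; apply/eqP; apply: (dom_r D y0).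
by rewrite mulrBl -mulrA H mulr1 mul1r subrr.
Qed.

Lemma lbez2 (R : nzRingType) : bezout_domain R -> forall a b : R,
  exists d x y a' b', d = x * a + y * b /\ a = a' * d /\ b = b' * d.
Proof.
move=> [D [_ LB]] a b.
have [d Hd] := LB [:: a; b].
have [c Hc] := (proj2 (Hd d) (ex_intro _ 1 (esym (mul1r d)))).
have [a' Ha] : exists t, a = t * d.
  apply/Hd; exists (fun i : 'I_2 => if val i == 0%N then 1 else 0).
  by rewrite /= big_ord_recr big_ord_recr big_ord0 /= mul1r mul0r add0r addr0.
have [b' Hb] : exists t, b = t * d.
  apply/Hd; exists (fun i : 'I_2 => if val i == 0%N then 0 else 1).
  by rewrite /= big_ord_recr big_ord_recr big_ord0 /= mul0r !add0r mul1r.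
exists d, (c ord0), (c ord_max), a', b'. split; last by split. 
rewrite Hc /= big_ord_recl big_ord1 /=. by congr (_ + c _ * _); apply: val_inj.
Qed.

Lemma comp_row (R : nzRingType) : bezout_domain R -> forall x y a b : R, x*a + y*b = 1 ->
 exists s t g h : R,
  (x*a + y*b = 1 /\ x*g + y*h = 0 /\ s*a + t*b = 0 /\ s*g + t*h = 1) /\
  (a*x + g*s = 1 /\ a*y + g*t = 0 /\ b*x + h*s = 0 /\ b*y + h*t = 1).
Proof.
move=> BD x y a b H; have D := BD.1.
have [a0|a0] := eqVneq a 0.
  have Hyb : y * b = 1 by move: H; rewrite a0 mulr0 add0r.
  have Hby := dom_inv D Hyb.
  exists 1, 0, 1, (- (b * x)); rewrite !mulr0 !mul0r !mulr1 !mul1r ?addr0 ?add0r.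
  rewrite a0 !mul0r !mulr0 add0r subrr Hby mulrN mulrA Hyb mul1r subrr.
  by rewrite add0r; do !split.
have [t0 [al [be [ga [de [Ht0 [Hga Hde]]]]]]] := lbez2 BD (- (a * y)) (1 - b * y).
set s0 := al * (1 - a * x) + be * (- (b * x)).
have K1 : (1 - a * x) * a + (- (a * y)) * b = 0.
  by rewrite mulrBl mul1r mulNr -addrA -opprD -!mulrA -mulrDr H mulr1 subrr.
have K2 : (- (b * x)) * a + (1 - b * y) * b = 0.
  by rewrite mulrBl mul1r mulNr addrCA -opprD -!mulrA -mulrDr H mulr1 subrr.
have Hk : s0 * a + t0 * b = 0.
  by rewrite /s0 Ht0 !mulrDl -!mulrA addrACA -!mulrDr K1 K2 !mulr0 addr0.
have E1 : a * x + ga * s0 = 1.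
  have : (1 - a * x - ga * s0) * a = 0.
    rewrite mulrBl -mulrA.
    have -> : s0 * a = - (t0 * b) by apply/eqP; rewrite -addr_eq0 Hk.
    by rewrite mulrN mulrA -Hga opprK.
  move/(dom_r D a0)/eqP; rewrite subr_eq0 subr_eq => /eqP ->.
  by rewrite addrC.
have E2 : a * y + ga * t0 = 0 by rewrite -Hga subrr.
have E3 : b * x + de * s0 = 0.
  have : (- (b * x) - de * s0) * a = 0.
    rewrite mulrBl -mulrA.
    have -> : s0 * a = - (t0 * b) by apply/eqP; rewrite -addr_eq0 Hk.
    by rewrite mulrN mulrA -Hde opprK.
  move/(dom_r D a0)/eqP; rewrite subr_eq0 => /eqP <-.
  by rewrite subrr.
have E4 : b * y + de * t0 = 1 by rewrite -Hde addrC subrK.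
have t00 : t0 != 0.
  apply/eqP => t00; move: Hde Hga; rewrite t00 !mulr0 => /eqP; rewrite subr_eq0 => /eqP Hby.
  move/eqP; rewrite oppr_eq0 => /eqP/(dom_l D a0) y0.
  by move: Hby; rewrite y0 mulr0 => /eqP; rewrite oner_eq0.
have F1 : x * ga + y * de = 0.
  apply: (dom_r D t00); rewrite ?mul0r.
  rewrite mulrDl -!mulrA -Hga -Hde mulrN mulrBr mulr1 !mulrA addrCA.
  by rewrite -opprD -mulrDl H mul1r subrr.
have F2 : s0 * ga + t0 * de = 1.
  apply/eqP; rewrite -subr_eq0; apply/eqP; apply: (dom_r D t00); rewrite ?mul0r.
  rewrite mulrBl mul1r mulrDl -!mulrA -Hga -Hde mulrN mulrBr mulr1.
  by rewrite addrCA !mulrA -opprD -mulrDl Hk mul0r oppr0 addr0 subrr.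
exists s0, t0, ga, de; do !split=> //.
Qed.

Lemma bezout_conv (R : nzRingType) : bezout_domain R -> bezout_domain R^c.
Proof.
case=> D [RB LB]; split; last by split; [exact LB | exact RB].
by move=> a b /D [] H; [right|left].
Qed.

Lemma comp_col (R : nzRingType) : bezout_domain R -> forall x y a b : R, a*x + b*y = 1 ->
 exists s t g h : R,
  (a*x + b*y = 1 /\ g*x + h*y = 0 /\ a*s + b*t = 0 /\ g*s + h*t = 1) /\
  (x*a + s*g = 1 /\ y*a + t*g = 0 /\ x*b + s*h = 0 /\ y*b + t*h = 1).
Proof.
move=> BD x y a b H.
have := @comp_row R^c (bezout_conv BD) x y a b H.
move=> [s [t [g [h [[H1 [H2 [H3 H4]]] [H5 [H6 [H7 H8]]]]]]]].
by exists s, t, g, h.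
Qed.

Definition inv2 (R : nzRingType) (g00 g01 g10 g11 h00 h01 h10 h11 : R) :=
  (g00*h00 + g01*h10 = 1 /\ g00*h01 + g01*h11 = 0 /\ g10*h00 + g11*h10 = 0 /\ g10*h01 + g11*h11 = 1) /\
  (h00*g00 + h01*g10 = 1 /\ h00*g01 + h01*g11 = 0 /\ h10*g00 + h11*g10 = 0 /\ h10*g01+h11*g11 = 1).

Lemma herm2 (R : nzRingType) : bezout_domain R -> forall a b : R,
  exists g00 g01 g10 g11 h00 h01 h10 h11 d : R, inv2 g00 g01 g10 g11 h00 h01 h10 h11 /\
   g00 * a + g01 * b = d /\ g10 * a + g11 * b = 0 /\ a = h00 * d /\ b = h10 * d.
Proof.
move=> BD a b; have D := BD.1.
have [/andP [a0 b0]|nz] := boolP ((a == 0) && (b == 0)).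
  exists 1, 0, 0, 1, 1, 0, 0, 1, 0; rewrite (eqP a0) (eqP b0).
  by rewrite /inv2 !mulr0 !mul0r !mulr1 !addr0 !add0r.
have [d [x [y [a' [b' [Hd [Ha Hb]]]]]]] := lbez2 BD a b.
have d0 : d != 0.
  by apply: contra nz => /eqP d0; rewrite Ha Hb d0 !mulr0 eqxx.
have Hxy : x * a' + y * b' = 1.
  apply/eqP; rewrite -subr_eq0; apply/eqP; apply: (dom_r D d0).
  by rewrite mulrBl mul1r mulrDl -!mulrA -Ha -Hb -Hd subrr.
have [s [t [g [h [[H1 [H2 [H3 H4]]] [H5 [H6 [H7 H8]]]]]]]] := comp_row BD Hxy.
exists x, y, s, t, a', g, b', h, d; split; first by do !split.
split; first by [].
split; last by [].
by rewrite Ha Hb !mulrA -mulrDl H3 mul0r.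
Qed.

Lemma herm2r (R : nzRingType) : bezout_domain R -> forall a b : R,
  exists q00 q01 q10 q11 p00 p01 p10 p11 d : R, inv2 q00 q01 q10 q11 p00 p01 p10 p11 /\
   a * q00 + b * q10 = d /\ a * q01 + b * q11 = 0 /\ a = d * p00 /\ b = d * p01.
Proof.
move=> BD a b.
have [g00 [g01 [g10 [g11 [h00 [h01 [h10 [h11 [d [[[E1 [E2 [E3 E4]]] [F1 [F2 [F3 F4]]]] [K1 [K2 [K3 K4]]]]]]]]]]]]] := @herm2 R^c (bezout_conv BD) a b.
exists g00, g10, g01, g11, h00, h10, h01, h11, d.
by do !split.
Qed.

Lemma rbez2 (R : nzRingType) : bezout_domain R -> forall a b : R,
  exists d x y a' b', d = a * x + b * y /\ a = d * a' /\ b = d * b'.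
Proof. by move=> BD a b; have := @lbez2 R^c (bezout_conv BD) a b. Qed.

Lemma ore (R : nzRingType) : bezout_domain R -> forall g w : R, g != 0 ->
  exists s t, s != 0 /\ w * s = g * t.
Proof.
move=> BD g w g0; have D := BD.1.
have [e [x [y [g' [w' [He [Hg Hw]]]]]]] := rbez2 BD g w.
have e0 : e != 0 by apply: contra g0 => /eqP e0; rewrite Hg e0 mul0r.
have g'0 : g' != 0 by apply: contra g0 => /eqP z0; rewrite Hg z0 mulr0.
have H : g' * x + w' * y = 1.
  apply/eqP; rewrite -subr_eq0; apply/eqP; apply: (dom_l D e0).
  by rewrite mulrBr mulr1 mulrDr !mulrA -Hg -Hw -He subrr.
have [y0|y0] := eqVneq y 0.
  have Hgx : g' * x = 1 by move: H; rewrite y0 mulr0 addr0.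
  have Hxg := dom_inv D Hgx.
  exists 1, (x * w'); split; first exact: oner_neq0.
  by rewrite mulr1 Hw Hg -mulrA (mulrA g') Hgx mul1r.
exists (y * g'), (1 - x * g'); split.
  by apply/eqP => /D [] /eqP; [rewrite (negPf y0)|rewrite (negPf g'0)].
have Hwy : w' * y = 1 - g' * x by rewrite -H (addrC (g' * x)) addrK.
rewrite Hw Hg -mulrA (mulrA w') Hwy -mulrA; congr (e * _).
by rewrite mulrBl mul1r mulrBr mulr1 mulrA. Qed.

Definition eqv (R : nzRingType) m n (A B : 'M[R]_(m, n)) :=
  exists P Q, invertible_mx P /\ invertible_mx Q /\ P *m A *m Q = B.

Lemma inv1 (R : nzRingType) n : invertible_mx (1%:M : 'M[R]_n).
Proof. by exists 1%:M; rewrite mul1mx. Qed.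

Lemma invM (R : nzRingType) n (P P' : 'M[R]_n) :
  invertible_mx P -> invertible_mx P' -> invertible_mx (P *m P').
Proof.
move=> [Pi [H1 H2]] [P'i [H3 H4]]; exists (P'i *m Pi); split.
  by rewrite -mulmxA (mulmxA P') H3 mul1mx H1.
by rewrite -mulmxA (mulmxA Pi) H2 mul1mx H4.
Qed.

Lemma eqv_refl (R : nzRingType) m n (A : 'M[R]_(m, n)) : eqv A A.
Proof. by exists 1%:M, 1%:M; rewrite mul1mx mulmx1; split; [exact: inv1|split; [exact: inv1|]]. Qed.

Lemma eqv_trans (R : nzRingType) m n (A B C : 'M[R]_(m, n)) : eqv A B -> eqv B C -> eqv A C.
Proof.
move=> [P [Q [HP [HQ E]]]] [P' [Q' [HP' [HQ' E']]]].
exists (P' *m P), (Q *m Q'); split; first exact: invM.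
split; first exact: invM.
by rewrite -E' -E !mulmxA.
Qed.

Lemma eqv_l (R : nzRingType) m n (P : 'M[R]_m) (A : 'M[R]_(m, n)) :
  invertible_mx P -> eqv A (P *m A).
Proof. by move=> HP; exists P, 1%:M; rewrite mulmx1; split=> //; split=> //; exact: inv1. Qed.

Lemma eqv_r (R : nzRingType) m n (Q : 'M[R]_n) (A : 'M[R]_(m, n)) :
  invertible_mx Q -> eqv A (A *m Q).
Proof. by move=> HQ; exists 1%:M, Q; rewrite mul1mx; split=> //; exact: inv1. Qed.

Lemma sum1 (R : nzRingType) n (F : 'I_n -> R) i :
  (forall l, l != i -> F l = 0) -> \sum_l F l = F i.
Proof.
move=> H; rewrite (bigD1 i) //= big1 ?addr0 // => l /andP [_ li]; exact: H.
Qed.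

Lemma sum2 (R : nzRingType) n (k : 'I_n.+1) (F : 'I_n.+1 -> R) : k != ord0 ->
  (forall l, l != ord0 -> l != k -> F l = 0) -> \sum_l F l = F ord0 + F k.
Proof.
move=> k0 H; rewrite (bigD1 ord0) //= (bigD1 k) /=; last by rewrite k0.
rewrite big1 ?addr0 // => l /andP [l0 lk]; exact: H.
Qed.

Definition Emx (R : nzRingType) n (k : 'I_n.+1) (a b c d : R) : 'M[R]_n.+1 :=
  \matrix_(i, j) if i == ord0 then (if j == ord0 then a else if j == k then b else 0)
   else if i == k then (if j == ord0 then c else if j == k then d else 0)
   else (i == j)%:R.

Lemma Emx_mull (R : nzRingType) n p (k : 'I_n.+1) (a b c d : R) (A : 'M[R]_(n.+1, p)) :
  k != ord0 -> Emx k a b c d *m A =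
  \matrix_(i, j) if i == ord0 then a * A ord0 j + b * A k j
     else if i == k then c * A ord0 j + d * A k j else A i j.
Proof.
move=> k0; apply/matrixP => i j; rewrite !mxE.
have [->|i0] := eqVneq i ord0.
  rewrite (sum2 k0) => [|l l0 lk]; rewrite !mxE !eqxx ?(negPf k0) //.
  by rewrite (negPf l0) (negPf lk) mul0r.
have [->|ik] := eqVneq i k.
  rewrite (sum2 k0) => [|l l0 lk]; rewrite !mxE !eqxx ?(negPf k0) //.
  by rewrite (negPf l0) (negPf lk) mul0r.
rewrite (sum1 (i := i)) => [|l li]; rewrite !mxE (negPf i0) (negPf ik) ?eqxx ?mul1r //.
by rewrite eq_sym (negPf li) mul0r.
Qed.

Lemma Emx_mulr (R : nzRingType) n p (k : 'I_n.+1) (a b c d : R) (A : 'M[R]_(p, n.+1)) :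
  k != ord0 -> A *m Emx k a b c d =
  \matrix_(i, j) if j == ord0 then A i ord0 * a + A i k * c
     else if j == k then A i ord0 * b + A i k * d else A i j.
Proof.
move=> k0; apply/matrixP => i j; rewrite !mxE.
have [->|j0] := eqVneq j ord0.
  rewrite (sum2 k0) => [|l l0 lk]; rewrite !mxE !eqxx ?(negPf k0) //.
  by rewrite (negPf l0) (negPf lk) mulr0.
have [->|jk] := eqVneq j k.
  rewrite (sum2 k0) => [|l l0 lk]; rewrite !mxE !eqxx ?(negPf k0) //.
  by rewrite (negPf l0) (negPf lk) mulr0.
rewrite (sum1 (i := j)) => [|l li]; rewrite !mxE (negPf j0) (negPf jk) ?eqxx ?mulr1 //.
by rewrite (negPf li); case: (l == ord0); case: (l == k); rewrite mulr0.
Qed.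

Lemma Emx_one (R : nzRingType) n (k : 'I_n.+1) (a b c d a' b' c' d' : R) : k != ord0 ->
  (a*a' + b*c' = 1 /\ a*b' + b*d' = 0 /\ c*a' + d*c' = 0 /\ c*b' + d*d' = 1) ->
  Emx k a b c d *m Emx k a' b' c' d' = 1%:M.
Proof.
move=> k0 [H1 [H2 [H3 H4]]]; rewrite Emx_mull //; apply/matrixP => i j; rewrite !mxE !eqxx (negPf k0).
have [->|i0] := eqVneq i ord0.
  have [_|j0] := eqVneq j ord0; first exact: H1.
  have [e|jk] := eqVneq j k; first by subst j; rewrite H2.
  by rewrite !mulr0 addr0.
have [->|ik] := eqVneq i k.
  have [e|j0] := eqVneq j ord0; first by subst j; rewrite H3 ?(negPf k0).
  have [e|jk] := eqVneq j k; first by subst j; rewrite H4 ?eqxx.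
  by rewrite !mulr0 addr0 ?(eq_sym k) ?(negPf jk).
by [].
Qed.

Lemma Emx_inv (R : nzRingType) n (k : 'I_n.+1) (a b c d a' b' c' d' : R) : k != ord0 ->
  inv2 a b c d a' b' c' d' -> invertible_mx (Emx k a b c d).
Proof.
move=> k0 [H1 H2]; exists (Emx k a' b' c' d'); split; exact: Emx_one.
Qed.

Lemma herm_col (R : nzRingType) : bezout_domain R -> forall m n (A : 'M[R]_(m.+1, n)) (j0 : 'I_n),
  exists P g, invertible_mx P /\ forall i, (P *m A) i j0 = if i == ord0 then g else 0.
Proof.
move=> BD m n A j0.
suff [P [HP HA]] : exists P, invertible_mx P /\
     forall i : 'I_m.+1, (0 < i <= m)%N -> (P *m A) i j0 = 0.
  exists P, ((P *m A) ord0 j0); split=> // i.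
  have [->|i0] := eqVneq i ord0; first by [].
  apply: HA; apply/andP; split; last by rewrite -ltnS.
  by rewrite lt0n; apply/eqP => e; case/eqP: i0; exact: val_inj.
suff main : forall k, (k <= m)%N -> exists P : 'M_m.+1, invertible_mx P /\
     forall i : 'I_m.+1, (0 < i <= k)%N -> (P *m A) i j0 = 0 by exact: main.
elim => [|k IH] km.
  exists 1%:M; split; first exact: inv1.
  by move=> i; rewrite leqn0 andbC; case: eqP => // ->.
have [P [HP HA]] := IH (ltnW km).
set v := P *m A.
pose K : 'I_m.+1 := inord k.+1.
have KE : (K : nat) = k.+1 by rewrite /K inordK // ltnS.
have K0 : K != ord0 by apply/eqP => /(congr1 (@nat_of_ord _)); rewrite KE.
have [g00 [g01 [g10 [g11 [h00 [h01 [h10 [h11 [d [Hi [H1 [H2 _]]]]]]]]]]]] := herm2 BD (v ord0 j0) (v K j0).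
exists (Emx K g00 g01 g10 g11 *m P); split.
  by apply: invM => //; exact: Emx_inv Hi.
move=> i /andP [i0 ik].
rewrite -mulmxA -/v Emx_mull // mxE.
have [e|iK] := eqVneq i K; first by rewrite e (negPf K0).
have i0' : i != ord0 by apply/eqP => e; move: i0; rewrite e.
rewrite (negPf i0').
apply: HA; rewrite i0 /=.
move: ik; rewrite leq_eqVlt ltnS => /orP [/eqP iE|//].
by case/eqP: iK; apply: val_inj; rewrite /= KE iE.
Qed.

Lemma herm_row (R : nzRingType) : bezout_domain R -> forall m n (A : 'M[R]_(m, n.+1)) (i0 : 'I_m),
  exists Q g, invertible_mx Q /\ forall j, (A *m Q) i0 j = if j == ord0 then g else 0.
Proof.
move=> BD m n A i0.
suff [Q [HQ HA]] : exists Q, invertible_mx Q /\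
     forall j : 'I_n.+1, (0 < j <= n)%N -> (A *m Q) i0 j = 0.
  exists Q, ((A *m Q) i0 ord0); split=> // j.
  have [->|j0] := eqVneq j ord0; first by [].
  apply: HA; apply/andP; split; last by rewrite -ltnS.
  by rewrite lt0n; apply/eqP => e; case/eqP: j0; exact: val_inj.
suff main : forall k, (k <= n)%N -> exists Q : 'M_n.+1, invertible_mx Q /\
     forall j : 'I_n.+1, (0 < j <= k)%N -> (A *m Q) i0 j = 0 by exact: main.
elim => [|k IH] km.
  exists 1%:M; split; first exact: inv1.
  by move=> i; rewrite leqn0 andbC; case: eqP => // ->.
have [Q [HQ HA]] := IH (ltnW km).
set v := A *m Q.
pose K : 'I_n.+1 := inord k.+1.
have KE : (K : nat) = k.+1 by rewrite /K inordK // ltnS.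
have K0 : K != ord0 by apply/eqP => /(congr1 (@nat_of_ord _)); rewrite KE.
have [g00 [g01 [g10 [g11 [h00 [h01 [h10 [h11 [d [Hi [H1 [H2 _]]]]]]]]]]]] := herm2r BD (v i0 ord0) (v i0 K).
exists (Q *m Emx K g00 g01 g10 g11); split.
  by apply: invM => //; exact: Emx_inv Hi.
move=> j /andP [j0 jk].
rewrite mulmxA -/v Emx_mulr // mxE.
have [e|jK] := eqVneq j K; first by rewrite e (negPf K0).
have j0' : j != ord0 by apply/eqP => e; move: j0; rewrite e.
rewrite (negPf j0').
apply: HA; rewrite j0 /=.
move: jk; rewrite leq_eqVlt ltnS => /orP [/eqP iE|//].
by case/eqP: jK; apply: val_inj; rewrite /= KE iE.
Qed.

Lemma inv_lower (R : nzRingType) m n (v : 'M[R]_(n, m)) :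
  invertible_mx (block_mx (1%:M : 'M_m) 0 v 1%:M).
Proof.
exists (block_mx 1%:M 0 (- v) 1%:M); rewrite !mulmx_block.
rewrite !mulmx0 !mul0mx !mul1mx !mulmx1 !addr0 !add0r subrr addNr.
by rewrite -!scalar_mx_block.
Qed.

Lemma inv_upper (R : nzRingType) m n (u : 'M[R]_(m, n)) :
  invertible_mx (block_mx (1%:M : 'M_m) u 0 1%:M).
Proof.
exists (block_mx 1%:M (- u) 0 1%:M); rewrite !mulmx_block.
rewrite !mulmx0 !mul0mx !mul1mx !mulmx1 !addr0 !add0r subrr addNr.
by rewrite -!scalar_mx_block.
Qed.

Lemma clear_block (R : nzRingType) m n (u : 'M[R]_(1, n)) (v : 'M[R]_(m, 1)) B :
  eqv (block_mx 1%:M u v B) (block_mx 1%:M 0 0 (B - v *m u)).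
Proof.
exists (block_mx 1%:M 0 (- v) 1%:M), (block_mx 1%:M (- u) 0 1%:M).
split; first exact: inv_lower.
split; first exact: inv_upper.
rewrite !mulmx_block.
rewrite !mulmx0 !mul0mx !mul1mx !mulmx1 !addr0 ?add0r mulNmx ?subrr ?addNr.
by rewrite mul1mx mul0mx addNr add0r addrC.
Qed.

Lemma clear1 (R : nzRingType) m n (A : 'M[R]_(1 + m, 1 + n)) :
  A ord0 ord0 = 1 -> exists B, eqv A (block_mx 1%:M 0 0 B).
Proof.
move=> A00.
have ul : ulsubmx A = 1%:M.
  apply/matrixP => i j; rewrite !ord1 !mxE /=.
  by rewrite -A00; congr (A _ _); apply: val_inj.
rewrite -[A]submxK ul; eexists; exact: clear_block.
Qed.

Lemma inv_nzl (R : nzRingType) m n (P : 'M[R]_m) (A : 'M[R]_(m, n)) :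
  invertible_mx P -> P *m A = 0 -> A = 0.
Proof. by move=> [P' [_ H]] E; rewrite -[A]mul1mx -H -mulmxA E mulmx0. Qed.

Lemma inv_nzr (R : nzRingType) m n (Q : 'M[R]_n) (A : 'M[R]_(m, n)) :
  invertible_mx Q -> A *m Q = 0 -> A = 0.
Proof. by move=> [Q' [H _]] E; rewrite -[A]mulmx1 -H mulmxA E mul0mx. Qed.

Lemma nz_entry (R : nzRingType) m n (A : 'M[R]_(m, n)) : A != 0 -> exists i j, A i j != 0.
Proof.
move=> A0; case: (boolP [exists i, exists j, A i j != 0]) => [/existsP [i /existsP [j H]]|/existsPn H].
  by exists i, j.
case/eqP: A0; apply/matrixP => i j; move: (H i) => /existsPn /(_ j); rewrite negbK mxE.
by move/eqP.
Qed.

Lemma step_col (R : nzRingType) : bezout_domain R -> forall m n (A : 'M[R]_(m.+1, n.+1)), A != 0 ->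
  exists A2 g, eqv A A2 /\ g != 0 /\ forall i, A2 i ord0 = if i == ord0 then g else 0.
Proof.
move=> BD m n A A0.
have [i [j Aij]] := nz_entry A0.
have [P [g [HP HPA]]] := herm_col BD A j.
have g0 : g != 0.
  apply/eqP => g0; move/eqP: Aij; apply.
  have [P' [_ HP']] := HP.
  rewrite -[A]mul1mx -HP' -mulmxA mxE (sum1 (i := ord0)) => [|l l0].
    by rewrite HPA eqxx g0 mulr0.
  by rewrite HPA (negPf l0) mulr0.
have [j0|j0] := eqVneq j ord0.
  exists (P *m A), g; split; first exact: eqv_l.
  by split=> // a; rewrite -j0 HPA.
exists (P *m A *m Emx j 0 1 1 0), g; split.
  apply: eqv_trans (eqv_l A HP) (eqv_r _ _).
  apply: Emx_inv j0 _; rewrite /inv2 !mul0r !mul1r !mulr0 ?mulr1 ?addr0 ?add0r.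
  by do !split.
split=> // a; rewrite Emx_mulr // mxE eqxx mulr0 add0r mulr1; exact: HPA.
Qed.

Definition simple2 (R : nzRingType) := forall a : R, a != 0 ->
     exists u1 u2 v1 v2 : R, u1 * a * v1 + u2 * a * v2 = 1.

Lemma aux_id (R : nzRingType) (p0 g q0 w ql pk b : R) :
  p0*g*q0 + (p0*w + pk*b)*ql = p0*(g*q0 + w*ql) + pk*(b*ql).
Proof. by rewrite mulrDl mulrDr -!mulrA addrA. Qed.

Lemma corner (R : nzRingType) : bezout_domain R -> simple2 R ->
  forall m n (A : 'M[R]_(m.+1, n.+1)), A != 0 ->
  (exists B : 'M_(m, n), eqv A (block_mx (1%:M : 'M_1) 0 0 B)) \/
  (exists e, e != 0 /\ eqv A (\matrix_(i, j) if (i == ord0) && (j == ord0) then e else 0)).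
Proof.
move=> BD S2 m n A A0; have D := BD.1.
have [A2 [g [E2 [g0 HA2]]]] := step_col BD A0.
case: (boolP [exists k : 'I_m.+1, exists l : 'I_n.+1, (k != ord0) && (l != ord0) && (A2 k l != 0)]).
  case/existsP => k /existsP [l /andP [/andP [k0 l0] b0]].
  left.
  set w := A2 ord0 l; set b := A2 k l.
  have [s [t [s0 Hst]]] := ore BD w g0.
  have c0 : g * b * s != 0.
    by apply/eqP => /D [/D []|]; apply/eqP; rewrite ?(negPf g0) ?(negPf b0) ?(negPf s0).
  have [u1 [u2 [v1 [v2 Hu]]]] := S2 _ c0.
  set p0 := u1; set pk := u2 * g; set q0 := b * s * v1 - t * v2; set ql := s * v2.
  have HX : g * q0 + w * ql = g * b * s * v1.
    rewrite /q0 /ql mulrBr mulrA Hst -!mulrA subrK.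
    by rewrite !mulrA.
  have H1 : p0 * (g * q0 + w * ql) + pk * (b * ql) = 1.
    by rewrite HX /p0 /pk /ql -Hu !mulrA.
  have [s1 [t1 [g1 [h1 Hi1]]]] := comp_row BD H1.
  have H2 : (p0 * g) * q0 + (p0 * w + pk * b) * ql = 1.
    by rewrite -H1 aux_id.
  have [s2 [t2 [g2 [h2 Hi2]]]] := comp_col BD H2.
  have HP3 : invertible_mx (Emx k p0 pk s1 t1).
    apply: Emx_inv k0 _; exact: Hi1.
  have HQ3 : invertible_mx (Emx l q0 s2 ql t2).
    case: Hi2 => [[e1 [e2 [e3 e4]]] [f1 [f2 [f3 f4]]]].
    by apply: (@Emx_inv _ _ l q0 s2 ql t2 (p0 * g) (p0 * w + pk * b) g2 h2 l0); do !split.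
  have [B EB] : exists B, eqv (Emx k p0 pk s1 t1 *m A2 *m Emx l q0 s2 ql t2) (block_mx (1%:M : 'M_1) 0 0 B).
    apply: clear1.
    rewrite Emx_mulr // mxE Emx_mull // !mxE !eqxx !HA2 eqxx (negPf k0) mulr0 addr0.
    exact: H2.
  exists B; apply: eqv_trans E2 (eqv_trans _ EB).
  exists (Emx k p0 pk s1 t1), (Emx l q0 s2 ql t2); do !split=> //.
move/existsPn => H.
have Z : forall k l, k != ord0 -> A2 k l = 0.
  move=> k l k0; have [->|l0] := eqVneq l ord0; first by rewrite HA2 (negPf k0).
  by move: (H k) => /existsPn /(_ l); rewrite k0 l0 /= negbK => /eqP.
have [Q [h [HQ HAQ]]] := herm_row BD A2 ord0.
right; exists h; split.
  apply/eqP => h0.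
  suff Z0 : A2 = 0 by move: (HA2 ord0); rewrite Z0 mxE eqxx => /esym/eqP; rewrite (negPf g0).
  apply: (inv_nzr HQ); apply/matrixP => i j; rewrite [RHS]mxE.
  have [->|i0] := eqVneq i ord0; first by rewrite HAQ h0; case: (j == ord0).
  by rewrite mxE big1 // => l _; rewrite Z // mul0r.
apply: eqv_trans E2 _; apply: eqv_trans (eqv_r A2 HQ) _.
have -> : A2 *m Q = \matrix_(i, j) if (i == ord0) && (j == ord0) then h else 0.
  apply/matrixP => i j; rewrite [RHS]mxE.
  have [->|i0] := eqVneq i ord0; first by rewrite HAQ.
  by rewrite mxE big1 // => l _; rewrite Z // mul0r.
exact: eqv_refl.
Qed.

Definition epsf (R : nzRingType) (r : nat) (e : R) (i : nat) : R := if (i.+1 < r)%N then 1 else e.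

Lemma inv_diag1 (R : nzRingType) m (P : 'M[R]_m) :
  invertible_mx P -> invertible_mx (block_mx (1%:M : 'M_1) 0 0 P).
Proof.
move=> [P' [H1 H2]]; exists (block_mx 1%:M 0 0 P'); rewrite !mulmx_block.
by rewrite !mulmx0 !mul0mx !mul1mx !addr0 !add0r H1 H2 -!scalar_mx_block.
Qed.

Lemma eqv_block (R : nzRingType) m n (B D : 'M[R]_(m, n)) :
  eqv B D -> eqv (block_mx (1%:M : 'M_1) 0 0 B) (block_mx (1%:M : 'M_1) 0 0 D).
Proof.
move=> [P [Q [HP [HQ E]]]].
exists (block_mx 1%:M 0 0 P), (block_mx 1%:M 0 0 Q); split; first exact: inv_diag1.
split; first exact: inv_diag1.
by rewrite !mulmx_block !mulmx0 !mul0mx !mul1mx ?mulmx1 ?addr0 ?add0r E mul0mx.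
Qed.

Lemma main_red (R : nzRingType) : bezout_domain R -> simple2 R ->
  forall m n (A : 'M[R]_(m, n)), exists r e, (r <= minn m n)%N /\ e != 0 /\
    eqv A (diag_rect m n r (epsf r e)).
Proof.
move=> BD S2; elim=> [|m IH] n A.
  exists 0%N, 1; split; first by [].
  split; first exact: oner_neq0.
  have -> : A = diag_rect 0 n 0 (epsf 0 1) by apply/matrixP => [[]].
  exact: eqv_refl.
case: n A => [|n] A.
  exists 0%N, 1; split; first by [].
  split; first exact: oner_neq0.
  have -> : A = diag_rect m.+1 0 0 (epsf 0 1) by apply/matrixP => i [].
  exact: eqv_refl.
have [A0|A0] := eqVneq A 0.
  exists 0%N, 1; split; first by [].
  split; first exact: oner_neq0.
  have -> : A = diag_rect m.+1 n.+1 0 (epsf 0 1).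
    by apply/matrixP => i j; rewrite A0 !mxE ltn0 andbF.
  exact: eqv_refl.
have [[B EB]|[e [e0 Ee]]] := corner BD S2 A0.
  have [r [e [Hr [e0 EBD]]]] := IH n B.
  exists r.+1, (if r == 0%N then 1 else e); split; first by rewrite minnSS ltnS.
  split; first by case: (r =P 0%N) => _; [exact: oner_neq0|].
  apply: eqv_trans EB (eqv_trans (eqv_block EBD) _).
  have -> : block_mx (1%:M : 'M_1) 0 0 (diag_rect m n r (epsf r e)) =
     diag_rect m.+1 n.+1 r.+1 (epsf r.+1 (if r == 0%N then 1 else e)).
    apply/matrixP => i j; rewrite [RHS]mxE.
    case: (@split_ordP 1 m i) => i' ->; case: (@split_ordP 1 n j) => j' ->.
    - rewrite block_mxEul !ord1 mxE /= /epsf.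
      by case: r {Hr EBD} => [|r].
    - by rewrite block_mxEur mxE ord1.
    - by rewrite block_mxEdl mxE ord1.
    rewrite block_mxEdr mxE /= eqSS ltnS /epsf.
    rewrite add1n ltnS; case: (nat_of_ord i' == nat_of_ord j') => //=; case: ltnP => // Hir.
    by case: r Hir {Hr EBD}.
  exact: eqv_refl.
exists 1%N, e; split; first by rewrite minnSS.
split=> //; apply: eqv_trans Ee _.
have -> : ((\matrix_(i, j) (if (i == ord0) && (j == ord0) then e else 0)) : 'M_(m.+1, n.+1)) =
   diag_rect m.+1 n.+1 1 (epsf 1 e).
  apply/matrixP => i j; rewrite !mxE /epsf /= ltnS leqn0.
  by case: i j => [[|i] Hi] [[|j] Hj]; rewrite /= ?eqSS ?andbF ?andbT.
exact: eqv_refl.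
Qed.

Lemma dir2 (R : nzRingType) : bezout_domain R -> simple2 R -> DK_elementary_divisor_ring R.
Proof.
move=> BD S2 m n A.
have [r [e [Hr [e0 [P [Q [HP [HQ E]]]]]]]] := main_red BD S2 A.
exists P, Q, r, (epsf r e); split=> //; split=> //; split=> //; split=> //.
  split. by move=> i _; rewrite /epsf; case: ifP => _ //; exact: oner_neq0.
split.
  move=> i Hi y _; rewrite /epsf Hi.
  by split; [exists y; rewrite mul1r | exists y; rewrite mulr1].
move=> i Hi; rewrite /epsf Hi; split; first exact: oner_neq0.
by split=> t; exists t; rewrite mul1r mulr1.
Qed.

Lemma inv_unit (R : nzRingType) : simple_ring R -> forall e : R, Defs.invariant e -> exists t, e * t = 1.
Proof.
move=> S e [e0 [H1 H2]].
have TI : twosided_ideal (fun x => exists t, x = e * t).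
  split.
  - by exists 0; rewrite mulr0.
  - by move=> x y [t ->] [t' ->]; exists (t + t'); rewrite mulrDr.
  - move=> r x [t ->]; have [t' Ht'] := H2 r; exists (t' * t).
    by rewrite mulrA Ht' mulrA.
  - by move=> r x [t ->]; exists (t * r); rewrite mulrA.
case: (S _ TI) => [Z|A].
  by move/eqP: e0; case; apply: Z; exists 1; rewrite mulr1.
by have [t Ht] := A 1; exists t.
Qed.

Lemma dir1 (R : nzRingType) : simple_ring R -> bezout_domain R ->
  DK_elementary_divisor_ring R -> simple2 R.
Proof.
move=> S BD DK a a0; have D := BD.1.
have [P [Q [r [eps [[P' [HP1 HP2]] [[Q' [HQ1 HQ2]] [E [Hr [Hn [_ Hinv]]]]]]]]]] :=
  DK 2%N 2%N (a%:M : 'M[R]_2).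
pose o1 : 'I_2 := ord_max.
have r2 : r = 2%N.
  apply/eqP; rewrite eqn_leq Hr /=; rewrite leqNgt; apply/negP => r1.
  have AQ : (a%:M : 'M[R]_2) *m Q = P' *m diag_rect 2 2 r eps.
    by rewrite -E !mulmxA HP2 mul1mx.
  have Q1 : forall i, Q i o1 = 0.
    move=> i; apply: (dom_l D a0).
    have := congr1 (fun M : 'M[R]_2 => M i o1) AQ; rewrite !mxE.
    rewrite (sum1 (i := i)) => [|l li]; last by rewrite mxE eq_sym (negPf li) mulr0n mul0r.
    rewrite mxE eqxx mulr1n => ->.
    rewrite big1 // => l _; rewrite mxE /=.
    case: ifP => //; last by rewrite mulr0.
    move=> /andP [/eqP lo lr]; move: lr; rewrite lo /= => lr.
    by move: r1; rewrite ltnS leqNgt lr.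
  have := congr1 (fun M : 'M[R]_2 => M o1 o1) HQ2; rewrite !mxE big1 => [|l _]; last by rewrite Q1 mulr0.
  by move/eqP; rewrite eq_sym mulr1n oner_eq0.
subst r.
have [t Ht] := inv_unit S (Hinv 0%N isT).
have E00 := congr1 (fun M : 'M[R]_2 => M ord0 ord0) E; rewrite /= [in RHS]mxE /= in E00.
exists (P ord0 ord0), (P ord0 o1), (Q ord0 ord0 * t), (Q o1 ord0 * t).
rewrite -Ht -E00.
have PA : forall b, (P *m a%:M) ord0 b = P ord0 b * a.
  move=> b; rewrite mxE (sum1 (i := b)) => [|l lb]; rewrite mxE ?eqxx ?mulr1n //.
  by rewrite (negPf lb) mulr0n mulr0.
rewrite mxE big_ord_recl big_ord1 !PA.
have -> : lift ord0 ord0 = o1 by apply: val_inj.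
by rewrite mulrDl !mulrA.
Qed.

Theorem mainTheorem8 (R : nzRingType) :
  simple_ring R -> bezout_domain R ->
  (DK_elementary_divisor_ring R <->
   forall a : R, a != 0 ->
     exists u1 u2 v1 v2 : R, u1 * a * v1 + u2 * a * v2 = 1).
Proof.
move=> S BD; split; first exact: dir1.
exact: dir2.
Qed.
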